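(* Let $n\geq 1$ be an integer and let $a,b\in\mathbb{C}$. Then $$C_n^{(a,b)}=a\,M_{n-1}^{(a+b,\,ab)},\qquad b\,S_n^{(a,b)}=(a+b)\,C_n^{(b,\,a+b)},\qquad S_n^{(a,b)}=(a+b)\,M_{n-1}^{(a+2b,\,ab+b^2)},$$ where $C_n^{(a,b)}$, $S_n^{(a,b)}$, $M_m^{(a,b)}$ are the weighted Catalan, Schröder and Motzkin numbers defined in the context.
   Context: Let $C_k=\frac{1}{k+1}\binom{2k}{k}$ be the Catalan numbers. For $m\geq 0$ and $a,b\in\mathbb{C}$: (1) The $(a,b)$-Motzkin number is $M_m^{(a,b)}=\sum_{k=0}^{\lfloor m/2\rfloor}\binom{m}{2k}C_k a^{m-2k}b^k$ (total weight of Motzkin paths of order $m$ with steps $(0,2),(2,0),(1,1)$ staying weakly above $y=x$, each $(1,1)$ step weighted $a$ and each $(2,0)$ step weighted $b$). (2) For $n\geq 1$, the valley type $(a,b)$-Catalan number is $C_n^{(a,b)}=\sum_{k=0}^{n-1}\frac{1}{n}\binom{n}{k}\binom{n}{k+1}a^{n-k}b^k$ (total weight of Catalan paths from $(0,0)$ to $(n,n)$ with steps $\mathbf N=(0,1)$, $\mathbf E=(1,0)$ never going below $y=x$, where each $\mathbf E$ step immediately followed by an $\mathbf N$ step has weight $b$ and every other $\mathbf E$ step has weight $a$). (3) The $(a,b)$-Schröder number is $S_n^{(a,b)}=\sum_{k=0}^{n}\binom{n+k}{2k}C_k a^{n-k}b^k$ (total weight of Schröder paths from $(0,0)$ to $(n,n)$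 with steps $(0,1),(1,0),(1,1)$ never going below $y=x$, each $(1,1)$ step weighted $a$ and each $(1,0)$ step weighted $b$). *)

(* Defs.v *)
From mathcomp Require Import all_boot all_order all_algebra.
From mathcomp Require Import complex.
Set Implicit Arguments. Unset Strict Implicit. Unset Printing Implicit Defensive.
Import GRing.Theory Num.Theory.
Local Open Scope ring_scope.

Definition catalan (F : fieldType) (k : nat) : F :=
  (k.+1%:R)^-1 * ('C(k.*2, k))%:R.

Definition motzkin (F : fieldType) (m : nat) (a b : F) : F :=
  \sum_(0 <= k < (m./2).+1) ('C(m, k.*2))%:R * catalan F k * a ^+ (m - k.*2) * b ^+ k.

Definition catalanAB (F : fieldType) (n : nat) (a b : F) : F :=
  \sum_(0 <= k < n) (n%:R)^-1 * ('C(n, k))%:R * ('C(n, k.+1))%:R * a ^+ (n - k) * b ^+ k.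

Definition schroder (F : fieldType) (n : nat) (a b : F) : F :=
  \sum_(0 <= k < n.+1) ('C(n + k, k.*2))%:R * catalan F k * a ^+ (n - k) * b ^+ k.

(* Main.v *)
Require Import Defs.
From mathcomp Require Import all_boot all_order all_algebra.
From mathcomp Require Import complex.
From mathcomp Require Import ring lra zify.
Import GRing.Theory Num.Theory.
Local Open Scope ring_scope.
Section S.
Variable F : numFieldType.

Lemma factR_neq0 n : (n`!)%:R != 0 :> F.
Proof. by rewrite pnatr_eq0 -lt0n fact_gt0. Qed.

Lemma binR y x : (x <= y)%N ->
  ('C(y, x))%:R = (y`!)%:R / ((x`!)%:R * ((y - x)`!)%:R) :> F.
Proof.
move=> h; rewrite -(bin_fact h) !natrM mulfK //.
by rewrite mulf_neq0 // factR_neq0.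
Qed.

Lemma factSR n : ((n.+1)`!)%:R = n.+1%:R * (n`!)%:R :> F.
Proof. by rewrite factS natrM. Qed.

Lemma pt1 n k j : (k.*2 + j < n)%N ->
  (n%:R)^-1 * ('C(n, j + k))%:R * ('C(j + k, k))%:R * ('C(n - (j + k), k.+1))%:R
  = ('C(n.-1, k.*2))%:R * catalan F k * ('C(n.-1 - k.*2, j))%:R :> F.
Proof.
move=> h; have [q ->] : exists q, n = (k.*2 + j + q).+1 by exists (n - (k.*2 + j).+1)%N; lia.
rewrite /catalan /=.
rewrite !binR; try lia.
have -> : ((k.*2 + j + q).+1 - (j + k) = (k + q).+1)%N by lia.
have -> : (j + k - k = j)%N by lia.
have -> : ((k + q).+1 - k.+1 = q)%N by lia.
have -> : (k.*2 + j + q - k.*2 = j + q)%N by lia.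
have -> : (k.*2 - k = k)%N by lia.
have -> : (j + q - j = q)%N by lia.
rewrite factSR (factSR (k + q)%N) (factSR k).
have h1 := factR_neq0 (k.*2 + j + q)%N. have h2 := factR_neq0 (j+k)%N.
have h3 := factR_neq0 (k+q)%N. have h4 := factR_neq0 k. have h5 := factR_neq0 j.
have h6 := factR_neq0 q. have h7 := factR_neq0 (k.*2). have h8 := factR_neq0 (j+q)%N.
have h9 : 1 + (k.*2%:R + j%:R + q%:R) != 0 :> F by rewrite -[1]/(1%:R) -!natrD pnatr_eq0.
have h10 : 1 + (k%:R + q%:R) != 0 :> F by rewrite -[1]/(1%:R) -!natrD pnatr_eq0.
have h11 : 1 + k%:R != 0 :> F by rewrite -[1]/(1%:R) -!natrD pnatr_eq0.
field.
by rewrite ?h9 ?h10 ?h11 ?h1 ?h2 ?h3 ?h4 ?h5 ?h6 ?h7 ?h8.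
Qed.

Lemma sum_ext0 (G : nat -> F) m1 m2 : (m1 <= m2)%N ->
  (forall i, (m1 <= i < m2)%N -> G i = 0) ->
  \sum_(0 <= i < m1) G i = \sum_(0 <= i < m2) G i.
Proof.
move=> h hz; rewrite [RHS](@big_cat_nat _ _ _ m1) //=.
by rewrite [X in _ = _ + X](eq_big_nat _ _ hz) big1_eq addr0.
Qed.

Lemma vdm1 n m : (m < n)%N ->
  (\sum_(0 <= k < n) 'C(m, k) * 'C(n - m, k.+1) = 'C(n, m.+1))%N.
Proof.
move=> h.
have e : (n - m = (n - m.+1).+1)%N by lia.
rewrite (@big_cat_nat _ _ _ (n - m)) /= ?leq_subr //.
rewrite [X in (_ + X)%N]big_nat_cond [X in (_ + X)%N]big1 ?addn0; last first.
  by move=> i /andP[/andP[h1 h2] _]; rewrite (@bin_small (n - m)) ?muln0 //; lia.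
rewrite big_mkord e.
rewrite (eq_bigr (fun i : 'I_(n - m.+1).+1 => 'C(m, i) * 'C(n - m, (n - m.+1) - i))%N); last first.
  move=> i _; have hi := ltn_ord i; congr (_ * _)%N.
  rewrite -[in LHS](@bin_sub (n - m.+1).+1 i.+1); last by lia.
  congr 'C(_, _); lia.
rewrite binomial.Vandermonde.
have -> : (m + (n - m) = n)%N by lia.
rewrite -bin_sub; last by lia.
congr 'C(_, _); lia.
Qed.

Lemma nzf n : (n`!)%:R != 0 :> F. Proof. exact: factR_neq0. Qed.

Lemma binmul n k j : (k < n)%N -> (j <= n)%N ->
  ('C(n, k.+1) * 'C(k.+1, j) = 'C(n, j) * 'C(n - j, n.-1 - k))%N.
Proof.
move=> hk hj.
case: (ltnP k.+1 j) => hjk.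
  by rewrite (@bin_small k.+1) // (@bin_small (n - j)) ?muln0 //; lia.
apply/eqP; rewrite -(eqr_nat F) !natrM !binR; try lia.
set r := (n - k.+1)%N. set s := (k.+1 - j)%N.
have -> : (n - j = s + r)%N by rewrite /r /s; lia.
have -> : (n.-1 - k = r)%N by rewrite /r; lia.
have -> : (s + r - r = s)%N by lia.
apply/eqP.
have := nzf n. have := nzf k.+1. have := nzf r. have := nzf j.
have := nzf s. have := nzf (s + r)%N.
move=> *; field.
by rewrite ?(nzf n) ?(nzf k.+1) ?(nzf r) ?(nzf j) ?(nzf s) ?(nzf (s+r)%N).
Qed.

Lemma vdm2 n j : (0 < n)%N -> (j <= n)%N ->
  (\sum_(0 <= k < n) 'C(n, k) * ('C(n, k.+1) * 'C(k.+1, j))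
   = 'C(n, j) * 'C(n + (n - j), n.-1))%N.
Proof.
move=> hn hj.
rewrite (eq_big_nat _ _ (F2 := fun k => 'C(n, j) * ('C(n, k) * 'C(n - j, n.-1 - k)))%N); last first.
  by move=> k /andP[_ hk]; rewrite binmul // mulnCA.
rewrite -big_distrr /=; congr (_ * _)%N.
have e : n = (n.-1).+1 by lia.
rewrite big_mkord.
rewrite -binomial.Vandermonde.
move: (n.-1) e => p e; subst n; by [].
Qed.

Lemma pt2 n i : (0 < n)%N -> (i <= n)%N ->
  (n%:R)^-1 * ('C(n, n - i))%:R * ('C(n + i, n.-1))%:R
  = ('C(n + i, i.*2))%:R * catalan F i.
Proof.
case: n => [//|p] _ hi.
rewrite /catalan /= !binR; try lia.
have -> : (p.+1 - (p.+1 - i) = i)%N by lia.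
have -> : (p.+1 + i - p = i.+1)%N by lia.
have -> : (p.+1 + i - i.*2 = p.+1 - i)%N by lia.
have -> : (i.*2 - i = i)%N by lia.
rewrite (factSR p) (factSR i).
have := nzf p. have := nzf i. have := nzf (p.+1 - i)%N. have := nzf (p.+1 + i)%N.
have := nzf (i.*2).
have h9 : 1 + p%:R != 0 :> F by rewrite -[1]/(1%:R) -!natrD pnatr_eq0.
have h11 : 1 + i%:R != 0 :> F by rewrite -[1]/(1%:R) -!natrD pnatr_eq0.
move=> *; field.
by rewrite ?h9 ?h11 ?(nzf p) ?(nzf i) ?(nzf (p.+1 - i)%N) ?(nzf (p.+1 + i)%N) ?(nzf (i.*2)).
Qed.

Lemma sum_shift (G : nat -> F) k n :
  \sum_(k <= m < n) G m = \sum_(0 <= j < n - k) G (j + k)%N.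
Proof. by rewrite -{1}[k]add0n big_addn. Qed.

Lemma exprDn_nat (x y : F) N M : (N < M)%N ->
  (x + y) ^+ N = \sum_(0 <= i < M) ('C(N, i))%:R * x ^+ (N - i) * y ^+ i.
Proof.
move=> h; rewrite exprDn -(@sum_ext0 _ N.+1) //; last first.
  by move=> i /andP[hi _]; rewrite bin_small // mul0r mul0r.
rewrite big_mkord; apply: eq_bigr => i _; by rewrite -mulr_natl mulrA.
Qed.

Lemma id1 n (a b : F) : (0 < n)%N ->
  catalanAB n a b = a * motzkin n.-1 (a + b) (a * b).
Proof.
move=> hn.
pose g k m := (n%:R)^-1 * ('C(n, m))%:R * ('C(m, k))%:R * ('C(n - m, k.+1))%:R : F.
have step1 : catalanAB n a b =
   \sum_(0 <= m < n) \sum_(0 <= k < n) g k m * (a ^+ (n - m) * b ^+ m).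
  rewrite /catalanAB; apply: eq_big_nat => m /andP[_ hm].
  rewrite -big_distrl /=.
  have -> : \sum_(0 <= k < n) g k m = (n%:R)^-1 * ('C(n, m))%:R * ('C(n, m.+1))%:R.
    rewrite -(@vdm1 n m hm) natr_sum big_distrr /=; apply: eq_big_nat => k _.
    by rewrite /g natrM; ring.
  by rewrite !mulrA.
rewrite step1 exchange_big_nat /= /motzkin.
rewrite [X in _ = a * X](@sum_ext0 _ (n.-1)./2.+1 n); first last.
- move=> k /andP[hk _]; rewrite bin_small ?mul0r //.
  by rewrite -ltn_half_double.
- by rewrite ltn_half_double; lia.
rewrite big_distrr; apply: eq_big_nat => k /andP[_ hk] /=.
case: (ltnP k.*2 n) => h2k; last first.
  rewrite bin_small ?mul0r ?mulr0; last by lia.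
  rewrite big1_seq // => m /andP[_]; rewrite mem_index_iota => /andP[_ hm].
  case: (ltnP m k) => hmk.
    by rewrite /g (@bin_small m) ?mulr0 ?mul0r.
  by rewrite /g (@bin_small (n - m)) ?mulr0 ?mul0r //; lia.
rewrite (@big_cat_nat _ _ _ k) /=; [|lia|lia].
rewrite big1_seq ?add0r; last first.
  move=> m /andP[_]; rewrite mem_index_iota => /andP[_ hm].
  by rewrite /g (@bin_small m) ?mulr0 ?mul0r.
rewrite sum_shift (@exprDn_nat _ _ _ (n - k)); last by lia.
rewrite big_distrr /= big_distrl /= big_distrr /=.
apply: eq_big_nat => j /andP[_ hj].
case: (ltnP (k.*2 + j) n) => hkj; last first.
  rewrite /g (@bin_small (n - (j + k))) ?mulr0 ?mul0r; last by lia.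
  rewrite (@bin_small (n.-1 - k.*2)); last by lia.
  by rewrite !(mulr0, mul0r).
rewrite /g /= pt1 //.
have -> : (n - (j + k) = (n.-1 - k.*2 - j + k).+1)%N by lia.
rewrite exprS !exprD exprMn; ring.
Qed.

Lemma id2 n (a b : F) : (0 < n)%N ->
  b * schroder n a b = (a + b) * catalanAB n b (a + b).
Proof.
move=> hn.
pose c j := (n%:R)^-1 * ('C(n, j))%:R * ('C(n + (n - j), n.-1))%:R : F.
transitivity (\sum_(0 <= j < n.+1) c j * (a ^+ j * b ^+ (n.+1 - j))).
  rewrite /schroder big_distrr /= big_nat_rev /=.
  apply: eq_big_nat => j /andP[_ hj].
  rewrite add0n subSS.
  have hi : (n - j <= n)%N by lia.
  rewrite /c -(@pt2 n (n - j) hn hi).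
  have -> : (n - (n - j) = j)%N by lia.
  have -> : (n.+1 - j = (n - j).+1)%N by lia.
  rewrite exprS; ring.
rewrite /catalanAB big_distrr /=.
transitivity (\sum_(0 <= k < n) \sum_(0 <= j < n.+1)
   (n%:R)^-1 * ('C(n, k) * ('C(n, k.+1) * 'C(k.+1, j)))%:R * (a ^+ j * b ^+ (n.+1 - j))); last first.
  apply: eq_big_nat => k /andP[_ hk].
  rewrite (addrC a b) mulrC -!mulrA -exprSr (@exprDn_nat _ _ _ n.+1); last by lia.
  rewrite !big_distrr /=; apply: eq_big_nat => j /andP[_ hj].
  case: (ltnP k.+1 j) => hjk.
    by rewrite (@bin_small k.+1 j) // !(muln0, mulr0, mul0r).
  have -> : (n.+1 - j = (n - k) + (k.+1 - j))%N by lia.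
  rewrite exprD !natrM; ring.
rewrite exchange_big_nat /=; apply: eq_big_nat => j /andP[_ hj].
rewrite -big_distrl /= -big_distrr /= -natr_sum vdm2 //.
by rewrite /c /= natrM !mulrA.
Qed.

Lemma catalan0 : catalan F 0 = 1.
Proof. by rewrite /catalan /= bin0 invr1 mul1r. Qed.

Lemma schroder_b0 n (a : F) : schroder n a 0 = a ^+ n.
Proof.
rewrite /schroder big_ltn // big1_seq ?addr0.
  by rewrite double0 addn0 bin0 catalan0 subn0 expr0 !mulr1 mul1r.
move=> k /andP[_]; rewrite mem_index_iota => /andP[hk _].
by rewrite expr0n; case: k hk => // k _; rewrite mulr0.
Qed.

Lemma motzkin_b0 m (a : F) : motzkin m a 0 = a ^+ m.
Proof.
rewrite /motzkin big_ltn // big1_seq ?addr0.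
  by rewrite double0 bin0 catalan0 subn0 expr0 !mulr1 mul1r.
move=> k /andP[_]; rewrite mem_index_iota => /andP[hk _].
by rewrite expr0n; case: k hk => // k _; rewrite mulr0.
Qed.

Lemma id3 n (a b : F) : (0 < n)%N ->
  schroder n a b = (a + b) * motzkin n.-1 (a + 2%:R * b) (a * b + b ^+ 2).
Proof.
move=> hn.
have h2 := @id2 n a b hn.
rewrite (@id1 n b (a + b) hn) in h2.
have -> : a + 2%:R * b = b + (a + b) by rewrite mulr2n; ring.
have -> : a * b + b ^+ 2 = b * (a + b) by ring.
have [->|bn0] := eqVneq b 0.
  rewrite schroder_b0 !mul0r addr0 add0r motzkin_b0 -exprS.
  by case: n hn {h2}.
apply: (mulfI bn0); rewrite h2; ring.
Qed.
End S.

Theorem theorem1p3 (R : rcfType) (n : nat) (a b : R[i]) :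
  (1 <= n)%N ->
  [/\ catalanAB n a b = a * motzkin n.-1 (a + b) (a * b),
      b * schroder n a b = (a + b) * catalanAB n b (a + b) &
      schroder n a b = (a + b) * motzkin n.-1 (a + 2%:R * b) (a * b + b ^+ 2)].
Proof.
move=> hn; split.
- exact: (@id1 _ n a b hn).
- exact: (@id2 _ n a b hn).
- exact: (@id3 _ n a b hn).
Qed.
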